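(* Let $G=(V,E)$ be a finite, connected, undirected graph with $n\ge2$ vertices and let $r>1$. Then the absorption time $\tau$ of the Moran process on $G$ with fitness $r$ (started from a single mutant at any vertex) satisfies $$\mathbb{E}[\tau]\le\frac{r}{r-1}n^3\phi(G)\le\frac{r}{r-1}n^4.$$
   Context: The Moran process on $G$ with mutant fitness $r>0$ is the Markov chain $(X_i)_{i\ge0}$ whose state $X_i\subseteq V$ is the set of vertices occupied by mutants; every other vertex is occupied by a non-mutant of fitness $1$. Write $W(S)=r|S|+|V\setminus S|$ for the total fitness. Given $X_i=S$, one step is: choose a vertex $x$ with probability $r/W(S)$ if $x\in S$ and $1/W(S)$ if $x\notin S$; then choose a neighbour $y$ of $x$ uniformly at random; set $X_{i+1}=S\cup\{y\}$ if $x\in S$ and $X_{i+1}=S\setminus\{y\}$ if $x\notin S$. The process starts from $X_0=\{x\}$ for a single vertex $x$. The absorption time is $\tau=\min\{i: X_i=\emptyset\text{ or }X_i=V\}$. For $X\subseteq V$, $\phi(X)=\sum_{x\in X}\frac{1}{\deg x}$, and $\phi(G)=\phi(V)$. *)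

(* Defs.v *)
From HB Require Import structures.
From mathcomp Require Import all_boot all_order all_algebra.
Set Implicit Arguments. Unset Strict Implicit. Unset Printing Implicit Defensive.
Import Order.TTheory GRing.Theory Num.Theory.
Local Open Scope ring_scope.

Section Moran.
Variables (R : realFieldType) (T : finType) (e : rel T).

Definition deg (x : T) : nat := #|[set y | e x y]|.

Definition phi (X : {set T}) : R := \sum_(x in X) ((deg x)%:R)^-1.

Variable r : R.

Definition fitness (S : {set T}) : R := r * (#|S|%:R) + (#|~: S|%:R).

Definition trans (S S' : {set T}) : R :=
  \sum_(x : T) \sum_(y : T | e x y)
     ((if x \in S then r else 1) / fitness S) * ((deg x)%:R)^-1 *
     (S' == (if x \in S then y |: S else S :\ y))%:R.

(* dist x0 k S = P(X_k = S) for the chain started at X_0 = {x0} *)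
Fixpoint dist (x0 : T) (k : nat) (S : {set T}) : R :=
  match k with
  | 0 => (S == [set x0])%:R
  | k'.+1 => \sum_(S0 : {set T}) dist x0 k' S0 * trans S0 S
  end.

(* P(tau > k) = P(X_k is neither empty nor V); both are absorbing states *)
Definition tail_prob (x0 : T) (k : nat) : R :=
  \sum_(S : {set T} | (S != set0) && (S != setT)) dist x0 k S.

(* partial sums of E[tau] = sum_{k >= 0} P(tau > k) *)
Definition exp_tau_partial (x0 : T) (K : nat) : R :=
  \sum_(k < K) tail_prob x0 k.

End Moran.

Definition simple_connected_graph (T : finType) (e : rel T) : Prop :=
  symmetric e /\ irreflexive e /\ (forall x y : T, connect e x y).

(* Main.v *)
Require Import Defs.
From HB Require Import structures.
From mathcomp Require Import all_boot all_order all_algebra.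
From mathcomp Require Import ring.
Import Order.TTheory GRing.Theory Num.Theory.
Local Open Scope ring_scope.
Set Implicit Arguments. Unset Strict Implicit.

Section Proof7.
Variables (R : realFieldType) (T : finType) (e : rel T) (r : R).
Hypothesis esym : symmetric e.
Hypothesis econ : forall x y : T, connect e x y.
Hypothesis n2 : (2 <= #|T|)%N.
Hypothesis r1 : 1 < r.

Let W (S : {set T}) := fitness r S.
Let c (S : {set T}) x := ((if x \in S then r else 1) / W S) * ((deg e x)%:R)^-1.
Let f (S : {set T}) x y := if x \in S then y |: S else S :\ y.

Lemma r0 : 0 < r. Proof. exact: lt_trans r1. Qed.

Lemma W_gt0 S : 0 < W S.
Proof.
rewrite /W /fitness.
have := cardsC S; case: (posnP #|S|) => [->|hS] /= h.
  by rewrite mulr0 add0r ltr0n; move: h; rewrite add0n => ->; apply: leq_trans n2.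
by rewrite ltr_wpDr // mulr_gt0 // ?r0 // ltr0n.
Qed.

Lemma W_le S : W S <= r * #|T|%:R.
Proof.
rewrite /W /fitness -(cardsC S) natrD mulrDr lerD2l.
by rewrite -{1}(mul1r (#|~: S|%:R)) ler_wpM2r // ltW.
Qed.

Lemma deg_pos x : (0 < deg e x)%N.
Proof.
have [y hy] : exists y, y != x.
  apply/existsP; rewrite -negb_forall; apply/negP => /forallP h.
  have : (#|T| <= 1)%N.
    by rewrite -(card1 x); apply: subset_leq_card; apply/subsetP => z _; rewrite inE; apply/eqP/eqP/h.
  by rewrite leqNgt (leq_trans _ n2).
have /connectP [p hp hl] := econ x y.
case: p hp hl => [|z p] /=; first by move=> _ h; rewrite h eqxx in hy.
move=> /andP [hxz _] _; rewrite /deg card_gt0; apply/set0Pn; exists z; by rewrite inE.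
Qed.

Lemma deg_le x : (deg e x <= #|T|)%N.
Proof. exact: max_card. Qed.


Lemma trans_g S (g : {set T} -> R) :
  \sum_S' trans e r S S' * g S' = \sum_x \sum_(y | e x y) c S x * g (f S x y).
Proof.
rewrite /trans.
under eq_bigr => S' _ do rewrite mulr_suml; rewrite exchange_big /=.
apply: eq_bigr => x _.
under eq_bigr => S' _ do rewrite mulr_suml; rewrite exchange_big /=.
apply: eq_bigr => y _.
rewrite (bigD1 (f S x y)) //= big1 ?addr0.
  by rewrite /f /c eqxx mulr1.
by move=> S' /negbTE h; rewrite /f h mulr0 mul0r.
Qed.

Lemma sum_c S x : \sum_(y | e x y) c S x = (if x \in S then r else 1) / W S.
Proof.
rewrite sumr_const.
have -> : #|e x| = deg e x by rewrite /deg; apply: eq_card => y; rewrite inE.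
rewrite /c -[LHS]mulr_natr.
rewrite divfK; first by [].
by rewrite pnatr_eq0 -lt0n deg_pos.
Qed.

Lemma mass S : \sum_S' trans e r S S' = 1.
Proof.
have := trans_g S (fun _ => 1); under eq_bigr do rewrite mulr1.
move=> ->; under eq_bigr do under eq_bigr do rewrite mulr1.
under eq_bigr do rewrite sum_c.
rewrite -mulr_suml (bigID (mem S)) /=.
rewrite (eq_bigr (fun _ => r)); last by move=> x ->.
rewrite [X in _ + X](eq_bigr (fun _ => 1)); last by move=> x /negbTE ->.
rewrite !sumr_const.
have -> : #|[pred i | i \notin S]| = #|~: S| by apply: eq_card => x; rewrite !inE.
rewrite /W /fitness -[r *+ _]mulr_natr -[1 *+ _]mulr_natr mul1r mulfV; first by [].
by have := W_gt0 S; rewrite /W /fitness => /lt0r_neq0.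
Qed.

Lemma trans_ge0 S S' : 0 <= trans e r S S'.
Proof.
apply: sumr_ge0 => x _; apply: sumr_ge0 => y _.
apply: mulr_ge0; last by rewrite ler0n.
apply: mulr_ge0; last by rewrite invr_ge0 ler0n.
apply: divr_ge0; last exact: ltW (W_gt0 S).
by case: ifP => _; [apply: ltW r0 | apply: ler01].
Qed.

Let ph := phi R e.
Let dv x := ((deg e x)%:R : R)^-1.
Let a S x y := (W S)^-1 * dv x * dv y.
Let D (S : {set T}) := \sum_x \sum_(y | e x y)
   (if (x \in S) && (y \notin S) then (r - 1) * a S x y else 0).

Lemma phiU1 (y : T) (S : {set T}) : y \notin S -> ph (y |: S) = dv y + ph S.
Proof. by move=> h; rewrite /ph /phi big_setU1. Qed.

Lemma phiD1 (y : T) (S : {set T}) : y \in S -> ph S = dv y + ph (S :\ y).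
Proof. by move=> h; rewrite /ph /phi (big_setD1 _ h). Qed.

Lemma swap_e (F : T -> T -> R) :
  \sum_x \sum_(y | e x y) F x y = \sum_x \sum_(y | e x y) F y x.
Proof.
rewrite (exchange_big_dep predT) //=.
apply: eq_bigr => x _; apply: eq_bigl => y; by rewrite esym.
Qed.

Lemma drift (S : {set T}) : \sum_S' trans e r S S' * ph S' = ph S + D S.
Proof.
rewrite trans_g.
pose g1 x y := if (x \in S) && (y \notin S) then r * a S x y else 0.
pose g2 x y := if (x \notin S) && (y \in S) then a S x y else 0.
have pt x y : c S x * ph (f S x y) = c S x * ph S + g1 x y - g2 x y.
  rewrite /f /g1 /g2 /c /a; case: (boolP (x \in S)) => hx /=;
    case: (boolP (y \in S)) => hy /=.
  - have -> : y |: S = S by apply/setP=> z; rewrite !inE; case: eqP => // ->.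
    by rewrite !subr0 addr0.
  - rewrite phiU1 // subr0 /dv; ring.
  - rewrite [in RHS](phiD1 hy); rewrite /dv; ring.
  - have -> : S :\ y = S by apply/setP=> z; rewrite !inE; case: eqP => // ->; rewrite (negbTE hy).
    by rewrite !subr0 addr0.
under eq_bigr do under eq_bigr do rewrite pt.
have hph : ph S = \sum_x \sum_(y | e x y) c S x * ph S.
  by rewrite -(trans_g S (fun _ => ph S)) -mulr_suml mass mul1r.
rewrite [in RHS]hph /D.
under eq_bigr do rewrite sumrB big_split /=.
rewrite sumrB big_split /= -addrA; congr (_ + _).
rewrite (swap_e g2) -sumrB; apply: eq_bigr => x _; rewrite -sumrB.
apply: eq_bigr => y _; rewrite /g1 /g2 /a.
case: (x \in S); case: (y \in S) => /=; rewrite ?subr0 //.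
ring.
Qed.


Lemma boundary (S : {set T}) : S != set0 -> S != setT ->
  exists u v, [/\ u \in S, v \notin S & e u v].
Proof.
move=> /set0Pn [u hu]; rewrite -properT => /properP [_ [v _ hv]].
have /connectP [p hp hl] := econ u v.
elim: p u hu hp hl => [|z p IH] u hu /=; first by move=> _ h; rewrite h hu in hv.
move=> /andP [huz hp] hl.
case: (boolP (z \in S)) => hz; first exact: IH hz hp hl.
by exists u, z.
Qed.

Lemma a_lb (S : {set T}) u v : (r * #|T|%:R ^+ 3)^-1 <= a S u v.
Proof.
have dpos w : 0 < (deg e w)%:R :> R by rewrite ltr0n deg_pos.
have dle w : (deg e w)%:R <= #|T|%:R :> R by rewrite ler_nat deg_le.
rewrite /a /dv -!invfM lef_pV2 ?posrE; last 2 first.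
- by rewrite mulr_gt0 ?r0 // exprn_gt0 // ltr0n; apply: leq_trans n2.
- by rewrite !mulr_gt0 // W_gt0.
rewrite exprS exprS expr1 !mulrA.
apply: ler_pM => //; first by apply: ltW; rewrite mulr_gt0 ?W_gt0.
apply: ler_pM => //; first by apply: ltW; rewrite W_gt0.
exact: W_le.
Qed.

Lemma D_ge0 (S : {set T}) : 0 <= D S.
Proof.
apply: sumr_ge0 => x _; apply: sumr_ge0 => y _; case: ifP => _ //.
apply: mulr_ge0; first by rewrite subr_ge0 ltW.
apply: le_trans (a_lb S x y); rewrite invr_ge0 mulr_ge0 ?exprn_ge0 ?ler0n //.
exact: ltW r0.
Qed.

Lemma D_lb (S : {set T}) : S != set0 -> S != setT ->
  (r - 1) * (r * #|T|%:R ^+ 3)^-1 <= D S.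
Proof.
move=> h0 h1; have [u [v [hu hv huv]]] := boundary h0 h1.
have hge x y : 0 <= (if (x \in S) && (y \notin S) then (r - 1) * a S x y else 0).
  case: ifP => _ //; apply: mulr_ge0; first by rewrite subr_ge0 ltW.
  apply: le_trans (a_lb S x y); rewrite invr_ge0 mulr_ge0 ?exprn_ge0 ?ler0n //.
  exact: ltW r0.
rewrite /D (bigD1 u) //= (bigD1 v) //= hu hv /=.
rewrite -addrA ler_wpDr //.
- apply: addr_ge0; first by apply: sumr_ge0 => y _; have := hge u y; rewrite hu.
  apply: sumr_ge0 => x _; apply: sumr_ge0 => y _; exact: hge.
- by apply: ler_wpM2l; [rewrite subr_ge0; apply: ltW | exact: a_lb].
Qed.


Lemma dist_ge0 x0 k S : 0 <= dist e r x0 k S.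
Proof.
elim: k S => [|k IH] S /=; first by rewrite ler0n.
by apply: sumr_ge0 => S0 _; rewrite mulr_ge0 ?IH ?trans_ge0.
Qed.

Lemma dist_step x0 k (g : {set T} -> R) :
  \sum_S dist e r x0 k.+1 S * g S =
  \sum_S0 dist e r x0 k S0 * \sum_S trans e r S0 S * g S.
Proof.
rewrite /=; under eq_bigr do rewrite mulr_suml.
rewrite exchange_big /=; apply: eq_bigr => S0 _; rewrite mulr_sumr.
by apply: eq_bigr => S _; rewrite mulrA.
Qed.

Lemma mass_k x0 k : \sum_S dist e r x0 k S = 1.
Proof.
elim: k => [|k IH].
  rewrite /= (bigD1 [set x0]) //= eqxx big1 ?addr0 // => S /negbTE ->; by [].
have := dist_step x0 k (fun _ => 1).
under eq_bigr do rewrite mulr1. move=> ->.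
under eq_bigr do (under eq_bigr do rewrite mulr1; rewrite mass mulr1).
exact: IH.
Qed.

Lemma ph_le (S : {set T}) : ph S <= ph setT.
Proof.
rewrite /ph /phi [X in _ <= X](bigID (mem S)) /=.
have -> : \sum_(i in setT | i \in S) ((deg e i)%:R : R)^-1 = \sum_(i in S) ((deg e i)%:R)^-1.
  by apply: eq_bigl => x; rewrite inE.
rewrite ler_wpDr //; apply: sumr_ge0 => x _; by rewrite invr_ge0 ler0n.
Qed.

Let delta := (r - 1) * (r * #|T|%:R ^+ 3)^-1.
Let Psi x0 k := \sum_S dist e r x0 k S * ph S.

Lemma Psi_grow x0 K : delta * exp_tau_partial e r x0 K <= Psi x0 K.
Proof.
elim: K => [|K IH].
  rewrite /exp_tau_partial big_ord0 mulr0; apply: sumr_ge0 => S _.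
  rewrite mulr_ge0 ?dist_ge0 //; apply: sumr_ge0 => x _.
  by rewrite invr_ge0 ler0n.
rewrite /exp_tau_partial big_ord_recr /= -/(exp_tau_partial e r x0 K) mulrDr.
rewrite /Psi dist_step.
under eq_bigr do rewrite drift mulrDr.
rewrite big_split /=; apply: lerD; first exact: IH.
rewrite /tail_prob mulr_sumr [X in _ <= X](bigID (fun S : {set T} => (S != set0) && (S != setT))) /=.
rewrite ler_wpDr //.
  by apply: sumr_ge0 => S _; rewrite mulr_ge0 ?dist_ge0 ?D_ge0.
apply: ler_sum => S /andP [h0 h1]; rewrite mulrC.
by apply: ler_wpM2l; [exact: dist_ge0 | exact: D_lb].
Qed.

Lemma Psi_le x0 K : Psi x0 K <= ph setT.
Proof.
rewrite /Psi -[X in _ <= X]mul1r -(mass_k x0 K) mulr_suml.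
by apply: ler_sum => S _; apply: ler_wpM2l; [exact: dist_ge0 | exact: ph_le].
Qed.

Lemma bound1 x0 K :
  exp_tau_partial e r x0 K <= r / (r - 1) * (#|T|%:R) ^+ 3 * phi R e setT.
Proof.
have hd : 0 < delta.
  rewrite /delta mulr_gt0 // ?subr_gt0 // invr_gt0 mulr_gt0 ?r0 //.
  by rewrite exprn_gt0 // ltr0n; apply: leq_trans n2.
have := le_trans (Psi_grow x0 K) (Psi_le x0 K).
rewrite -ler_pdivlMl // => h; apply: le_trans h _.
rewrite /delta /ph invfM invrK.
rewrite [X in _ <= X](_ : _ = (r - 1)^-1 * (r * #|T|%:R ^+ 3) * phi R e setT) //.
ring.
Qed.

End Proof7.

Lemma phi_le_n (R : realFieldType) (T : finType) (e : rel T) :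
  (forall x y : T, connect e x y) -> (2 <= #|T|)%N -> phi R e setT <= #|T|%:R.
Proof.
move=> econ n2.
have <- : \sum_(x in [set: T]) (1 : R) = #|T|%:R by rewrite sumr_const cardsT.
apply: ler_sum => x _.
have hd := deg_pos econ n2 x.
rewrite invr_le1 ?ler1n ?ltr0n //.
by rewrite unitfE pnatr_eq0 -lt0n.
Qed.

Unset Implicit Arguments.
Theorem theorem7 (R : realFieldType) (T : finType) (e : rel T) (r : R) :
  simple_connected_graph e -> (2 <= #|T|)%N -> 1 < r ->
  (forall (x0 : T) (K : nat),
     exp_tau_partial e r x0 K <= r / (r - 1) * (#|T|%:R) ^+ 3 * phi R e setT)
  /\ r / (r - 1) * (#|T|%:R) ^+ 3 * phi R e setT <= r / (r - 1) * (#|T|%:R) ^+ 4.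
Proof.
move=> [esym [_ econ]] n2 r1; split; first exact: bound1.
rewrite [in X in _ <= X]exprSr mulrA.
apply: ler_wpM2l; last exact: phi_le_n.
apply: mulr_ge0; last by rewrite exprn_ge0 ?ler0n.
by rewrite divr_ge0 // ?subr_ge0 ltW // (lt_trans ltr01 r1).
Qed.
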